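(* Let $G$ be an ST graph. An arc $v\to w$ of $G$ is disimplicial in $G$ if and only if $\mathrm{repr}(v)\to\mathrm{repr}(w)$ is disimplicial in $\mathrm{Repr}(G)$.
   Context: A digraph $G$ is a finite set $V(G)$ with $E(G)\subseteq V(G)\times V(G)$. $N^+(v)$, $N^-(v)$ are the out- and in-neighborhoods and $N(v)=N^+(v)\cup N^-(v)$. A source has $N^-(v)=\emptyset$, a sink has $N^+(v)=\emptyset$; $G$ is an ST graph if every vertex is a source or a sink. An arc $v\to w$ is disimplicial if $x\to y$ is an arc for all $x\in N^-(w)$, $y\in N^+(v)$. Two vertices $v,w$ of an ST graph are twins when $N(v)=N(w)$; a twin block is a maximal set of pairwise twin vertices (the blocks partition $V(G)$). A function $\mathrm{repr}$ selects one vertex $\mathrm{repr}(B)\in B$ of each block $B$, and $\mathrm{repr}(v)=\mathrm{repr}(B)$ for $v\in B$. The twin reduction $\mathrm{Repr}(G)$ is the subdigraph of $G$ induced by $\{\mathrm{repr}(B): B \text{ a twin block}\}$. *)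

(* Defs.v *)
From mathcomp Require Import all_boot.
Set Implicit Arguments. Unset Strict Implicit. Unset Printing Implicit Defensive.

Section Digraph.
Variables (T : finType) (E : rel T).

Definition outN (v : T) : {set T} := [set y | E v y].
Definition inN (v : T) : {set T} := [set x | E x v].
Definition nbhd (v : T) : {set T} := outN v :|: inN v.

Definition is_source (v : T) : bool := inN v == set0.
Definition is_sink (v : T) : bool := outN v == set0.

Definition ST_graph : Prop := forall v, is_source v || is_sink v.

Definition twins (v w : T) : bool := nbhd v == nbhd w.

Definition repr_function (repr : T -> T) : Prop :=
  (forall v, twins (repr v) v) /\ (forall v w, twins v w -> repr v = repr w).

(* vertex set of the twin reduction Repr(G) *)
Definition repr_set (repr : T -> T) : {set T} := [set repr v | v in T].

Definition disimplicial_in (S : {set T}) (v w : T) : bool :=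
  [&& v \in S, w \in S, E v w &
   [forall x in S, forall y in S, (E x w && E v y) ==> E x y]].

Definition disimplicial (v w : T) : bool := disimplicial_in [set: T] v w.

End Digraph.

(* Main.v *)
Require Import Defs.
From mathcomp Require Import all_boot.
Set Implicit Arguments. Unset Strict Implicit.

Lemma twl (T : finType) (E : rel T) x x' y :
  ST_graph E -> twins E x x' -> E x y -> E x' y.
Proof.
move=> ST /eqP tw Exy.
have : y \in nbhd E x' by rewrite -tw /nbhd !inE Exy.
rewrite /nbhd !inE => /orP [//|Eyx].
have := ST y; rewrite /is_source /is_sink => /orP [] /eqP /setP H.
  by move: (H x); rewrite !inE Exy.
by move: (H x'); rewrite !inE Eyx.
Qed.

Lemma twr (T : finType) (E : rel T) x y y' :
  ST_graph E -> twins E y y' -> E x y -> E x y'.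
Proof.
move=> ST /eqP tw Exy.
have : x \in nbhd E y' by rewrite -tw /nbhd !inE Exy orbT.
rewrite /nbhd !inE => /orP [Eyx|//].
have := ST x; rewrite /is_source /is_sink => /orP [] /eqP /setP H.
  by move: (H y'); rewrite !inE Eyx.
by move: (H y); rewrite !inE Exy.
Qed.

Lemma twE (T : finType) (E : rel T) repr x y :
  ST_graph E -> repr_function E repr -> E x y = E (repr x) (repr y).
Proof.
move=> ST [R1 _].
have s : forall a, twins E a (repr a) by move=> a; rewrite /twins eq_sym; apply: R1.
apply/idP/idP => H.
  exact: (twr ST (s y) (twl ST (s x) H)).
exact: (twr ST (R1 y) (twl ST (R1 x) H)).
Qed.

Theorem proposition7 (T : finType) (E : rel T) (repr : T -> T) (v w : T) :
  ST_graph E -> repr_function E repr -> E v w ->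
  disimplicial E v w = disimplicial_in E (repr_set repr) (repr v) (repr w).
Proof.
move=> ST RF Evw.
have e x y := @twE T E repr x y ST RF.
have inR : forall a, repr a \in repr_set repr by move=> a; apply: imset_f.
rewrite /disimplicial /disimplicial_in !inR !inE Evw -e Evw /=.
case: RF => [R1 _].
apply/idP/idP.
  move=> /forallP H; apply/forallP => x; apply/implyP => _.
  apply/forallP => y; apply/implyP => _; apply/implyP => /andP [H1 H2].
  have := H x; rewrite inE /= => /forallP /(_ y); rewrite inE /=; apply/implyP.
  by rewrite (twr ST (R1 w) H1) (twl ST (R1 v) H2) implybb.
move=> /forallP H; apply/forallP => x; apply/implyP => _.
apply/forallP => y; apply/implyP => _; apply/implyP => /andP [H1 H2].
have := H (repr x); rewrite inR /= => /forallP /(_ (repr y)); rewrite inR /=.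
by rewrite -!e H1 H2.
Qed.
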